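(* Let $\Gamma$ be a connected infinite graph whose vertices have uniformly bounded degree. Then $\Gamma$ admits a transitive translation-like action by $\mathbb{Z}$ if and only if $\Gamma$ has at most two ends.
   Context: $\Gamma$ is regarded as a metric space on its vertex set via the path-length metric. For a group $H$ and a metric space $(X,d)$, a right action $*$ of $H$ on $X$ is translation-like if it is free ($x*h=x$ implies $h=1_H$) and for every $h\in H$ the set $\{d(x,x*h): x\in X\}$ is bounded. The number of ends of a connected graph is the supremum, over finite sets $A$ of edges, of the number of infinite connected components of $\Gamma - A$. *)

(* Defs.v *)
From Stdlib Require Import ZArith List Arith.
Import ListNotations.
Open Scope Z_scope.

Section Graphs.
Variable V : Type.
Variable adj : V -> V -> Prop.

Inductive walk : nat -> V -> V -> Prop :=
| walk_nil : forall x, walk 0 x x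
| walk_cons : forall n x y z, adj x y -> walk n y z -> walk (S n) x z.

Definition gdist_le (x y : V) (n : nat) : Prop :=
  exists m, (m <= n)%nat /\ walk m x y.

Definition connected_graph : Prop := forall x y : V, exists n, walk n x y.

Definition bounded_degree : Prop :=
  exists D : nat, forall (v : V) (l : list V),
    NoDup l -> (forall w, In w l -> adj v w) -> (length l <= D)%nat.

(* Gamma - A, for a finite set A of (undirected) edges given as a list *)
Definition adj_minus (A : list (V * V)) (u v : V) : Prop :=
  adj u v /\ ~ In (u, v) A /\ ~ In (v, u) A.
End Graphs.

Arguments walk {V} adj _ _ _.
Arguments gdist_le {V} adj _ _ _.
Arguments connected_graph {V} adj.
Arguments bounded_degree {V} adj.
Arguments adj_minus {V} adj A _ _.

Definition infinite_set {V : Type} (P : V -> Prop) : Prop :=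
  ~ exists l : list V, forall x, P x -> In x l.

Definition infinite_type (V : Type) : Prop := infinite_set (fun _ : V => True).

Definition component {V : Type} (adj : V -> V -> Prop) (x : V) : V -> Prop :=
  fun y => exists n, walk adj n x y.

(* number of ends <= 2: for every finite edge set A, Gamma - A has at most
   two infinite connected components, i.e. there are no three vertices lying
   in pairwise distinct infinite components of Gamma - A. *)
Definition at_most_two_ends {V : Type} (adj : V -> V -> Prop) : Prop :=
  forall (A : list (V * V)) (x1 x2 x3 : V),
    infinite_set (component (adj_minus adj A) x1) ->
    infinite_set (component (adj_minus adj A) x2) ->
    infinite_set (component (adj_minus adj A) x3) ->
    ~ component (adj_minus adj A) x1 x2 ->
    ~ component (adj_minus adj A) x1 x3 ->
    ~ component (adj_minus adj A) x2 x3 ->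
    False.

Definition right_action_Z {V : Type} (act : V -> Z -> V) : Prop :=
  (forall x, act x 0 = x) /\
  (forall x g h, act (act x g) h = act x (g + h)).

Definition free_action_Z {V : Type} (act : V -> Z -> V) : Prop :=
  forall x h, act x h = x -> h = 0.

Definition translation_like_Z {V : Type} (adj : V -> V -> Prop)
  (act : V -> Z -> V) : Prop :=
  right_action_Z act /\ free_action_Z act /\
  (forall h : Z, exists B : nat, forall x, gdist_le adj x (act x h) B).

Definition transitive_action_Z {V : Type} (act : V -> Z -> V) : Prop :=
  forall x y : V, exists h : Z, act x h = y.

(* Main.v *)
Require Import Defs.
From Stdlib Require Import ZArith List Lia Classical ClassicalEpsilon Cantor.
Import ListNotations.

Definition dec (P : Prop) : bool :=
  if excluded_middle_informative P then true else false.
Lemma decP (P : Prop) : dec P = true <-> P.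
Proof. unfold dec; destruct (excluded_middle_informative P); split; congruence || tauto. Qed.
Lemma decF (P : Prop) : dec P = false <-> ~ P.
Proof. unfold dec; destruct (excluded_middle_informative P); split; congruence || tauto. Qed.

Section Walks.
Variable V : Type.
Variable R : V -> V -> Prop.

Lemma walk_app n m x y z : walk R n x y -> walk R m y z -> walk R (n + m) x z.
Proof. induction 1; intros; simpl; auto. econstructor; eauto. Qed.

Lemma walk_snoc n x y z : walk R n x y -> R y z -> walk R (S n) x z.
Proof.
  intros H1 H2. replace (S n) with (n + 1)%nat by lia. eapply walk_app; eauto.
  econstructor; eauto. constructor.
Qed.

Lemma walk_rev (Hs : forall a b, R a b -> R b a) n x y : walk R n x y -> walk R n y x.
Proof. induction 1. constructor. eapply walk_snoc; eauto. Qed.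

Lemma walk_mono (R' : V -> V -> Prop) (HR : forall a b, R a b -> R' a b) n x y :
  walk R n x y -> walk R' n x y.
Proof. induction 1; econstructor; eauto. Qed.
End Walks.

Section G.
Variable V : Type.
Variable adj : V -> V -> Prop.
Hypothesis Hsym : forall x y, adj x y -> adj y x.

Definition gd x y k := gdist_le adj x y k.

Lemma gd_refl x k : gd x x k.
Proof. exists 0%nat; split; [lia|constructor]. Qed.
Lemma gd_adj x y : adj x y -> gd x y 1.
Proof. exists 1%nat; split; [lia|]. econstructor; eauto; constructor. Qed.
Lemma gd_trans x y z a b : gd x y a -> gd y z b -> gd x z (a + b).
Proof. intros [m [Hm H]] [m' [Hm' H']]. exists (m + m')%nat; split; [lia|]. eapply walk_app; eauto. Qed.
Lemma gd_sym x y a : gd x y a -> gd y x a.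
Proof. intros [m [Hm H]]. exists m; split; auto. apply walk_rev; auto. Qed.
Lemma gd_mono x y a b : (a <= b)%nat -> gd x y a -> gd x y b.
Proof. intros Hab [m [Hm H]]. exists m; split; [lia|auto]. Qed.

Inductive rch (P : V -> Prop) : nat -> V -> V -> Prop :=
| rch0 x : P x -> rch P 0 x x
| rchS n x y z : P x -> adj x y -> rch P n y z -> rch P (S n) x z.

Definition comp (P : V -> Prop) (u : V) : V -> Prop := fun y => exists n, rch P n u y.

Lemma rch_start P n x y : rch P n x y -> P x.
Proof. destruct 1; auto. Qed.
Lemma rch_end P n x y : rch P n x y -> P y.
Proof. induction 1; auto. Qed.
Lemma rch_app P n m x y z : rch P n x y -> rch P m y z -> rch P (n + m) x z.
Proof. induction 1; intros; simpl; auto. econstructor; eauto. Qed.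
Lemma rch_snoc P n x y z : rch P n x y -> adj y z -> P z -> rch P (S n) x z.
Proof.
  intros H1 H2 H3. replace (S n) with (n + 1)%nat by lia. eapply rch_app; eauto.
  econstructor; eauto. eapply rch_end; eauto. constructor; auto.
Qed.
Lemma rch_rev P n x y : rch P n x y -> rch P n y x.
Proof. induction 1. constructor; auto. eapply rch_snoc; eauto. Qed.
Lemma rch_mono (P P' : V -> Prop) (HP : forall v, P v -> P' v) n x y : rch P n x y -> rch P' n x y.
Proof. induction 1; econstructor; eauto. Qed.
Lemma rch_walk P n x y : rch P n x y -> walk adj n x y.
Proof. induction 1; econstructor; eauto. Qed.
Lemma rch_gd P n x y : rch P n x y -> gd x y n.
Proof. intros H; exists n; split; auto. eapply rch_walk; eauto. Qed.

Lemma rch_sub (P P' : V -> Prop) n u w :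
  rch P n u w -> (forall z, comp P u z -> P' z) -> rch P' n u w.
Proof.
  induction 1; intros Hz.
  - constructor. apply Hz. exists 0%nat; constructor; auto.
  - econstructor; eauto. apply Hz. exists 0%nat; constructor; auto.
    apply IHrch. intros z0 [m Hm]. apply Hz. exists (S m). econstructor; eauto.
Qed.

Lemma rch_cut P (Q : V -> Prop) n u z : rch P n u z -> Q z -> ~ Q u ->
  exists m y y', (m < n)%nat /\ rch (fun v => P v /\ ~ Q v) m u y /\ adj y y' /\ Q y' /\ P y'.
Proof.
  induction 1; intros Hq Hnq.
  - contradiction.
  - destruct (classic (Q y)) as [Hy|Hy].
    + exists 0%nat, x, y. repeat split; auto; try lia. constructor; auto. eapply rch_start; eauto.
    + destruct (IHrch Hq Hy) as [m [y0 [yy [Hm [G1 [G2 [G3 G4]]]]]]].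
      exists (S m), y0, yy. repeat split; auto; try lia. econstructor; eauto.
Qed.

Lemma comp_trans P u v w : comp P u v -> comp P v w -> comp P u w.
Proof. intros [n H] [m H']. exists (n + m)%nat; eapply rch_app; eauto. Qed.
Lemma comp_sym P u v : comp P u v -> comp P v u.
Proof. intros [n H]; exists n; apply rch_rev; auto. Qed.

Definition fin (A : V -> Prop) : Prop := exists l, forall v, A v -> In v l.

Lemma fin_infinite A : infinite_set A <-> ~ fin A.
Proof. reflexivity. Qed.

Lemma fin_sub (A B : V -> Prop) : (forall v, A v -> B v) -> fin B -> fin A.
Proof. intros H [l Hl]; exists l; auto. Qed.
Lemma inf_sup (A B : V -> Prop) : (forall v, A v -> B v) -> infinite_set A -> infinite_set B.
Proof. intros H HA HB. apply HA. eapply fin_sub; eauto. Qed.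
Lemma fin_union (A B : V -> Prop) : fin A -> fin B -> fin (fun v => A v \/ B v).
Proof. intros [l Hl] [l' Hl']. exists (l ++ l'). intros v [H|H]; apply in_or_app; auto. Qed.

Definition eqd (x y : V) : {x = y} + {x <> y} := excluded_middle_informative (x = y).

Definition tolist (A : V -> Prop) : list V :=
  match excluded_middle_informative (fin A) with
  | left H => proj1_sig (constructive_indefinite_description _ H)
  | right _ => []
  end.
Lemma tolist_spec A : fin A -> forall v, A v -> In v (tolist A).
Proof.
  intros H. unfold tolist. destruct (excluded_middle_informative (fin A)); [|contradiction].
  destruct (constructive_indefinite_description _ f); simpl; auto.
Qed.

Definition ex (A : V -> Prop) : list V := nodup eqd (filter (fun v => dec (A v)) (tolist A)).
Lemma ex_spec A : fin A -> NoDup (ex A) /\ forall v, In v (ex A) <-> A v.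
Proof.
  intros H. split. apply NoDup_nodup. intros v. unfold ex. rewrite nodup_In, filter_In, decP.
  split; [tauto|]. intros; split; auto. apply tolist_spec; auto.
Qed.

Lemma fin_list (l : list V) : fin (fun v => In v l).
Proof. exists l; auto. Qed.

Lemma NoDup_lt (l l' : list V) x : NoDup l -> incl l l' -> In x l' -> ~ In x l -> (length l < length l')%nat.
Proof.
  intros H1 H2 H3 H4. assert (NoDup (x :: l)) by (constructor; auto).
  apply (NoDup_incl_length (l':=l')) in H. simpl in H. lia. intros y [<-|Hy]; auto.
Qed.

Fixpoint chain (k : nat) (l : list V) : Prop :=
  match l with
  | a :: ((b :: _) as t) => gd a b k /\ chain k t
  | _ => True
  end.

Lemma chain_tail k a l : chain k (a :: l) -> chain k l.
Proof. destruct l; simpl; tauto. Qed.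

Lemma chain_app_cons k l1 a l2 : chain k (l1 ++ [a]) -> chain k (a :: l2) -> chain k (l1 ++ a :: l2).
Proof.
  induction l1 as [|x l1 IH]; simpl; auto.
  destruct l1 as [|y l1']; simpl in *.
  - tauto.
  - intros [H1 H2] H3. split; auto. apply IH; auto.
Qed.

Lemma chain_rev k l : chain k l -> chain k (rev l).
Proof.
  induction l as [|a t IH]; simpl; auto.
  destruct t as [|b t']; simpl; auto.
  intros [H1 H2]. rewrite <- app_assoc. simpl. apply chain_app_cons.
  - specialize (IH H2). simpl in IH. auto.
  - simpl. split; auto. apply gd_sym; auto.
Qed.

Lemma last_def (y : V) l d d' : last (y :: l) d = last (y :: l) d'.
Proof. revert y. induction l as [|z l IH]; intros y; simpl; auto. destruct l; auto. apply (IH z). Qed.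

Lemma chain_app k a l1 b l2 : chain k (a :: l1) -> chain k (b :: l2) -> gd (last (a :: l1) a) b k ->
  chain k ((a :: l1) ++ b :: l2).
Proof.
  revert a. induction l1 as [|x l1 IH]; intros a; simpl; auto.
  intros [H1 H2] H3 H4. split; auto. apply (IH x); auto.
  destruct l1 as [|y l]; auto. simpl in H4 |- *. change (gd (last (y :: l) x) b k). rewrite (last_def y l x a); auto.
Qed.

Lemma rev_last (l : list V) d : l <> [] -> exists r, rev l = last l d :: r.
Proof.
  intros H. pose proof (app_removelast_last d H) as E.
  remember (last l d) as a. remember (removelast l) as r0. rewrite E.
  rewrite rev_app_distr. simpl. eauto.
Qed.

Lemma last_app_cons (l1 : list V) b r d : last (l1 ++ b :: r) d = last (b :: r) d.
Proof. induction l1 as [|x l1 IH]; simpl; auto. rewrite IH. destruct l1; simpl; auto. Qed.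

Lemma last_rev_cons (c : V) t d : last (rev (c :: t)) d = c.
Proof. simpl. rewrite last_last. auto. Qed.

Lemma cube : forall n (G : list V) v, (length G <= n)%nat -> NoDup G -> In v G ->
  (forall u, In u G -> exists m, rch (fun z => In z G) m u v) ->
  exists L, NoDup L /\ (forall z, In z L <-> In z G) /\ (exists t, L = v :: t) /\
            gd (last L v) v 1 /\ chain 3 L.
Proof.
  induction n as [|n IH]; intros G v Hlen Hnd Hv Hc.
  - destruct G; simpl in *; [contradiction | lia].
  - destruct (classic (exists u, In u G /\ u <> v)) as [[u [Hu Huv]]|Hall].
    2:{ exists [v]. split. constructor; auto; constructor.
        split. intros z; simpl; split. intros [<-|[]]; auto.
        intros Hz. left. apply NNPP; intro Hne. apply Hall. exists z; split; auto.
        split. eauto. split. simpl. apply gd_refl. simpl; auto. }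
    destruct (Hc u Hu) as [m Hm].
    destruct (rch_cut _ (fun w => w = v) _ _ _ Hm eq_refl Huv) as [m1 [c [v' [_ [Hrc [Hadj [-> Hv']]]]]]].
    assert (HcG : In c G /\ c <> v) by (eapply rch_end in Hrc; auto).
    set (PG := fun w => In w G /\ ~ w = v).
    set (C := filter (fun z => dec (comp PG c z)) G).
    set (Rl := filter (fun z => negb (dec (comp PG c z))) G).
    assert (HC : forall z, In z C <-> In z G /\ comp PG c z).
    { intros z. unfold C. rewrite filter_In, decP. tauto. }
    assert (HR : forall z, In z Rl <-> In z G /\ ~ comp PG c z).
    { intros z. unfold Rl. rewrite filter_In, Bool.negb_true_iff, decF. tauto. }
    assert (HvR : In v Rl).
    { apply HR. split; auto. intros [k Hk]. apply rch_end in Hk. unfold PG in Hk. tauto. }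
    assert (HcC : In c C).
    { apply HC. split. tauto. exists 0%nat. constructor. unfold PG; tauto. }
    assert (LC : (length C < S n)%nat).
    { eapply Nat.lt_le_trans; [|exact Hlen]. apply (NoDup_lt _ _ v); auto.
      apply NoDup_filter; auto. intros z Hz; apply HC in Hz; tauto.
      intros Hz; apply HC in Hz. destruct Hz as [_ [k Hk]]. apply rch_end in Hk. unfold PG in Hk; tauto. }
    assert (LR : (length Rl < S n)%nat).
    { eapply Nat.lt_le_trans; [|exact Hlen]. apply (NoDup_lt _ _ c); auto.
      apply NoDup_filter; auto. intros z Hz; apply HR in Hz; tauto. tauto.
      intros Hz; apply HR in Hz. destruct Hz as [_ Hz]. apply Hz. exists 0%nat. constructor. unfold PG; tauto. }
    destruct (IH Rl v ltac:(lia) ltac:(apply NoDup_filter; auto) HvR) as [L1 [N1 [M1 [[t1 E1] [La1 Ch1]]]]].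
    { intros z Hz. destruct (classic (z = v)) as [->|Hzv].
      - exists 0%nat. constructor; auto.
      - apply HR in Hz. destruct Hz as [HzG Hnc].
        destruct (Hc z HzG) as [k Hk].
        destruct (rch_cut _ (fun w => w = v) _ _ _ Hk eq_refl Hzv) as [k1 [y [v'' [_ [Hry [Hay [-> _]]]]]]].
        exists (S k1). eapply rch_snoc; eauto.
        eapply rch_sub; eauto. intros w Hw. apply HR. split.
        destruct Hw as [j Hj]; apply rch_end in Hj; tauto.
        intros Hcw. apply Hnc. eapply comp_trans; eauto. apply comp_sym; auto. }
    destruct (IH C c ltac:(lia) ltac:(apply NoDup_filter; auto) HcC) as [L2 [N2 [M2 [[t2 E2] [La2 Ch2]]]]].
    { intros z Hz. apply HC in Hz. destruct Hz as [HzG [k Hk]]. exists k.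
      eapply rch_sub. apply rch_rev; eauto. intros w Hw. apply HC. split.
      destruct Hw as [j Hj]; apply rch_end in Hj; unfold PG in Hj; tauto.
      eapply comp_trans; eauto. exists k; auto. }
    exists (L1 ++ rev L2). split.
    { apply NoDup_app; auto. apply NoDup_rev; auto. intros a Ha1 Ha2.
      apply in_rev in Ha2. apply M1, HR in Ha1. apply M2, HC in Ha2. tauto. }
    split.
    { intros z. rewrite in_app_iff, <- in_rev, M1, M2, HR, HC. split. intros [H|H]; tauto.
      intros Hz. destruct (classic (comp PG c z)); tauto. }
    split. { exists (t1 ++ rev L2). rewrite E1; auto. }
    assert (HL2 : L2 <> []) by (rewrite E2; discriminate).
    destruct (rev_last L2 c HL2) as [r Hr].
    split.
    { rewrite Hr. rewrite last_app_cons. rewrite <- Hr, E2, last_rev_cons.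
      apply gd_adj; auto. }
    rewrite E1, Hr. apply chain_app.
    + rewrite <- E1; exact Ch1.
    + rewrite <- Hr. apply chain_rev; auto.
    + rewrite <- E1. replace 3%nat with (1 + 1 + 1)%nat by lia.
      apply (gd_trans _ c _ (1 + 1) 1). apply (gd_trans _ v _ 1 1). exact La1.
      apply gd_sym, gd_adj; auto. apply gd_sym. exact La2.
Qed.

Hypothesis Hdeg : bounded_degree adj.

Lemma nbrs_ex v : exists l, forall w, adj v w <-> In w l.
Proof.
  destruct Hdeg as [D HD]. apply NNPP; intro Hn.
  assert (H : forall k, exists l, NoDup l /\ (forall w, In w l -> adj v w) /\ length l = k).
  { induction k as [|k IHk].
    - exists []. repeat split; auto. constructor. intros w [].
    - destruct IHk as [l [Hl1 [Hl2 Hl3]]].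
      assert (Hw : exists w, adj v w /\ ~ In w l).
      { apply NNPP; intro H. apply Hn. exists l. intros w; split; auto. intro Ha.
        apply NNPP; intro Hw. apply H. eauto. }
      destruct Hw as [w [Hw1 Hw2]]. exists (w :: l). repeat split.
      constructor; auto. intros z [<-|Hz]; auto. simpl; lia. }
  destruct (H (S D)) as [l [H1 [H2 H3]]]. specialize (HD v l H1 H2). lia.
Qed.

Definition nbrs v : list V := proj1_sig (constructive_indefinite_description _ (nbrs_ex v)).
Lemma nbrs_spec v w : adj v w <-> In w (nbrs v).
Proof. unfold nbrs. destruct (constructive_indefinite_description _ _); simpl; auto. Qed.

Fixpoint ballfrom (x : V) (n : nat) : list V :=
  match n with
  | O => [x]
  | S n => x :: flat_map (fun y => ballfrom y n) (nbrs x)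
  end.

Lemma ball_center x n : In x (ballfrom x n).
Proof. destruct n; simpl; auto. Qed.

Lemma ball_mono1 n : forall x z, In z (ballfrom x n) -> In z (ballfrom x (S n)).
Proof.
  induction n as [|n IH]; intros x z H.
  - simpl in H. destruct H as [<-|[]]. apply ball_center.
  - simpl in H. destruct H as [<-|H]. apply ball_center.
    apply in_flat_map in H. destruct H as [y [Hy Hz]].
    right. apply in_flat_map. exists y. split; auto.
Qed.

Lemma ball_mono n m x z : (n <= m)%nat -> In z (ballfrom x n) -> In z (ballfrom x m).
Proof. induction 1; auto. intros; apply ball_mono1; auto. Qed.

Lemma ball_walk n x z : walk adj n x z -> In z (ballfrom x n).
Proof.
  induction 1. apply ball_center.
  simpl. right. apply in_flat_map. exists y. split; auto. apply nbrs_spec; auto.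
Qed.

Lemma ball_gd x z N : gd x z N -> In z (ballfrom x N).
Proof. intros [m [Hm H]]. eapply ball_mono; eauto. apply ball_walk; auto. Qed.

Lemma ball_gd' n : forall x z, In z (ballfrom x n) -> gd x z n.
Proof.
  induction n as [|n IH]; intros x z H.
  - simpl in H. destruct H as [<-|[]]. apply gd_refl.
  - simpl in H. destruct H as [<-|H]. apply gd_refl.
    apply in_flat_map in H. destruct H as [y [Hy Hz]].
    replace (S n) with (1 + n)%nat by lia. eapply gd_trans. apply gd_adj. apply nbrs_spec; eauto.
    apply IH; auto.
Qed.

Lemma ball_rch n : forall x z, In z (ballfrom x n) -> exists m, rch (fun w => In w (ballfrom x n)) m z x.
Proof.
  induction n as [|n IH]; intros x z H.
  - simpl in H. destruct H as [<-|[]]. exists 0%nat. constructor. simpl; auto.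
  - simpl in H. destruct H as [<-|H]. exists 0%nat. constructor. apply ball_center.
    apply in_flat_map in H. destruct H as [y [Hy Hz]].
    destruct (IH y z Hz) as [m Hm]. exists (S m). eapply rch_snoc.
    eapply rch_mono; [|exact Hm]. intros w Hw. simpl. right. apply in_flat_map; eauto.
    apply Hsym, nbrs_spec; auto. apply ball_center.
Qed.

Lemma fin_gd x N : fin (fun z => gd x z N).
Proof. exists (ballfrom x N). intros; apply ball_gd; auto. Qed.

Lemma fin_near (E : list V) N : fin (fun z => exists e, In e E /\ gd z e N).
Proof.
  exists (flat_map (fun e => ballfrom e N) E). intros z [e [He Hz]].
  apply in_flat_map. exists e; split; auto. apply ball_gd, gd_sym; auto.
Qed.

Lemma ball_cover (S : list V) x : (forall s, In s S -> exists n, walk adj n x s) ->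
  exists N, forall s, In s S -> In s (ballfrom x N).
Proof.
  induction S as [|s S IH]; intros H.
  - exists 0%nat; intros s [].
  - destruct IH as [N HN]. intros; apply H; simpl; auto.
    destruct (H s (or_introl eq_refl)) as [n Hn].
    exists (N + n)%nat. intros s' [<-|Hs'].
    + eapply ball_mono; [|apply ball_walk; eauto]. lia.
    + eapply ball_mono; [|apply HN; auto]. lia.
Qed.

Lemma enum_ex (r : V) : connected_graph adj -> exists e : nat -> V, forall v, exists k, e k = v.
Proof.
  intros Hc. exists (fun k => let p := Cantor.of_nat k in nth (snd p) (ballfrom r (fst p)) r).
  intros v. destruct (Hc r v) as [n Hn]. apply ball_walk in Hn.
  destruct (In_nth _ _ r Hn) as [i [_ Hi]].
  exists (Cantor.to_nat (n, i)). rewrite Cantor.cancel_of_to. simpl. auto.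
Qed.

Definition adjA (S : list V) : list (V * V) := flat_map (fun s => map (fun w => (s, w)) (nbrs s)) S.

Lemma adjA_in S a b : In (a, b) (adjA S) -> In a S.
Proof. unfold adjA. rewrite in_flat_map. intros [s [Hs H]]. apply in_map_iff in H.
  destruct H as [w [E _]]. inversion E; subst; auto. Qed.

Lemma adjA_in2 S a b : In a S -> adj a b -> In (a, b) (adjA S).
Proof. intros Ha Hab. unfold adjA. apply in_flat_map. exists a; split; auto.
  apply in_map_iff. exists b; split; auto. apply nbrs_spec; auto. Qed.

Lemma comp_adjA S x y : ~ In x S -> (component (adj_minus adj (adjA S)) x y <-> comp (fun v => ~ In v S) x y).
Proof.
  intros Hx. split.
  - intros [n Hn]. exists n. revert Hx. induction Hn as [x|n x y' z Ha Hw IH]; intros Hx.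
    + constructor; auto.
    + destruct Ha as [Ha [H1 H2]]. econstructor; eauto. apply IH.
      intros Hy. apply H2. apply adjA_in2; auto.
  - intros [n Hn]. exists n. induction Hn as [x Hx'|n x y' z Hx' Ha Hr IH].
    + constructor.
    + econstructor; [|apply IH; exact (rch_start _ _ _ _ Hr)]. split; auto. split.
      intros H; apply adjA_in in H; contradiction.
      intros H; apply adjA_in in H. exact (rch_start _ _ _ _ Hr H).
Qed.

Lemma ends3 (Hends : at_most_two_ends adj) (S : list V) a b c :
  ~ In a S -> ~ In b S -> ~ In c S ->
  infinite_set (comp (fun v => ~ In v S) a) -> infinite_set (comp (fun v => ~ In v S) b) ->
  infinite_set (comp (fun v => ~ In v S) c) ->
  ~ comp (fun v => ~ In v S) a b -> ~ comp (fun v => ~ In v S) a c -> ~ comp (fun v => ~ In v S) b c -> False.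
Proof.
  intros Ha Hb Hc Ia Ib Ic Nab Nac Nbc.
  apply (Hends (adjA S) a b c).
  - eapply inf_sup; [|exact Ia]. intros v Hv. apply comp_adjA; auto.
  - eapply inf_sup; [|exact Ib]. intros v Hv. apply comp_adjA; auto.
  - eapply inf_sup; [|exact Ic]. intros v Hv. apply comp_adjA; auto.
  - rewrite comp_adjA; auto.
  - rewrite comp_adjA; auto.
  - rewrite comp_adjA; auto.
Qed.

Definition conn (P : V -> Prop) := forall u w, P u -> P w -> exists m, rch P m u w.
Definition OE (P : V -> Prop) := forall (S : list V) u w, P u -> ~ In u S -> P w -> ~ In w S ->
  infinite_set (comp (fun v => P v /\ ~ In v S) u) -> infinite_set (comp (fun v => P v /\ ~ In v S) w) ->
  exists n, rch (fun v => P v /\ ~ In v S) n u w.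

Definition PX (P : V -> Prop) (X : list V) := fun v => P v /\ ~ In v X.
Definition Inf (P : V -> Prop) (X : list V) := fun v => PX P X v /\ infinite_set (comp (PX P X) v).
Definition Wp (P : V -> Prop) (X : list V) := fun v => P v /\ ~ Inf P X v.

Lemma comp_inf_trans Q u z : comp Q u z -> infinite_set (comp Q u) -> infinite_set (comp Q z).
Proof. intros H. apply inf_sup. intros w Hw. eapply comp_trans; eauto. apply comp_sym; auto. Qed.
Lemma comp_fin_trans Q u z : comp Q u z -> ~ infinite_set (comp Q u) -> ~ infinite_set (comp Q z).
Proof. intros H H1 H2. apply H1. eapply comp_inf_trans; eauto. apply comp_sym; auto. Qed.

Lemma notinf_fin (A : V -> Prop) : ~ infinite_set A -> fin A.
Proof. intros H. apply NNPP. exact H. Qed.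

Lemma nonempty_inf (A : V -> Prop) : infinite_set A -> exists a, A a.
Proof. intros H. apply NNPP; intro H'. apply H. exists []. intros v Hv. apply H'; eauto. Qed.

Lemma exists_min (Q : nat -> Prop) : (exists n, Q n) -> exists n, Q n /\ forall m, (m < n)%nat -> ~ Q m.
Proof.
  intros [n Hn]. revert Hn. induction n as [n IH] using (well_founded_induction lt_wf).
  intros Hn. destruct (classic (exists m, (m < n)%nat /\ Q m)) as [[m [Hm Qm]]|H].
  - apply (IH m Hm Qm).
  - exists n. split; auto. intros m Hm Qm. apply H; eauto.
Qed.

Lemma noninf_fin P X : (forall v, P v -> exists x m, In x X /\ rch P m v x) ->
  fin (fun v => PX P X v /\ ~ infinite_set (comp (PX P X) v)).
Proof.
  intros Hc. exists (flat_map (fun x => flat_map (fun y => tolist (comp (PX P X) y)) (nbrs x)) X).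
  intros v [[Pv Xv] Hf]. destruct (Hc v Pv) as [x [m [Hx Hm]]].
  destruct (rch_cut _ (fun w => In w X) _ _ _ Hm Hx Xv) as [k [y [y' [_ [Hr [Ha [Hy' _]]]]]]].
  apply in_flat_map. exists y'. split; auto. apply in_flat_map. exists y. split.
  apply nbrs_spec, Hsym; auto.
  apply tolist_spec.
  - apply notinf_fin. eapply comp_fin_trans; [|exact Hf]. exists k; exact Hr.
  - exists k. apply rch_rev. exact Hr.
Qed.

Lemma W_fin P X : (forall v, P v -> exists x m, In x X /\ rch P m v x) -> fin (Wp P X).
Proof.
  intros Hc. destruct (noninf_fin P X Hc) as [l Hl]. exists (X ++ l).
  intros v [Pv Hn]. apply in_or_app. destruct (classic (In v X)) as [H|H]; auto.
  right. apply Hl. split. split; auto. intros Hi. apply Hn. split; auto. split; auto.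
Qed.

Lemma Inf_infinite P X : fin (Wp P X) -> infinite_set P -> infinite_set (Inf P X).
Proof.
  intros [l Hl] HP [l' Hl']. apply HP. exists (l ++ l'). intros v Pv. apply in_or_app.
  destruct (classic (Inf P X v)); [right|left]; auto. apply Hl; split; auto.
Qed.

Lemma Inf_sub P X u w n : Inf P X u -> rch (PX P X) n u w -> rch (Inf P X) n u w.
Proof.
  intros [Hu Iu] H. eapply rch_sub; eauto. intros z Hz. split.
  destruct Hz as [k Hk]; eapply rch_end; eauto.
  eapply comp_inf_trans; eauto.
Qed.

Lemma Inf_conn P X : OE P -> conn (Inf P X).
Proof.
  intros Hoe u w Hu Hw. destruct Hu as [[Pu Xu] Iu]. destruct Hw as [[Pw Xw] Iw].
  destruct (Hoe X u w Pu Xu Pw Xw Iu Iw) as [n Hn]. exists n.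
  apply Inf_sub; auto. split; [split|]; auto.
Qed.

Lemma rch_iff (A B : V -> Prop) n x y : (forall v, A v <-> B v) -> rch A n x y -> rch B n x y.
Proof. intros H. apply rch_mono. intros v; apply H. Qed.
Lemma inf_comp_iff (A B : V -> Prop) x : (forall v, A v <-> B v) -> infinite_set (comp A x) -> infinite_set (comp B x).
Proof. intros H. apply inf_sup. intros v [n Hn]. exists n. eapply rch_iff; eauto. Qed.

Lemma OE_Inf P X : OE P -> fin (Wp P X) -> OE (Inf P X).
Proof.
  intros Hoe Hf S u w Hu Su Hw Sw Iu Iw.
  destruct (ex_spec (Wp P X) Hf) as [_ Hex].
  assert (E : forall v, (Inf P X v /\ ~ In v S) <-> (P v /\ ~ In v (ex (Wp P X) ++ S))).
  { intros v. rewrite in_app_iff, Hex. unfold Wp. split.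
    - intros [Hi Hs]. split. destruct Hi as [[H _] _]; auto. intros [[_ H]|H]; tauto.
    - intros [Pv H]. split; [|tauto]. apply NNPP; intro Hn. apply H. left; split; auto. }
  destruct (Hoe (ex (Wp P X) ++ S) u w) as [n Hn].
  - destruct Hu as [[H _] _]; auto.
  - exact (proj2 (proj1 (E u) (conj Hu Su))).
  - destruct Hw as [[H _] _]; auto.
  - exact (proj2 (proj1 (E w) (conj Hw Sw))).
  - eapply inf_comp_iff; [|exact Iu]. exact E.
  - eapply inf_comp_iff; [|exact Iw]. exact E.
  - exists n. eapply rch_iff; [|exact Hn]. intros v; symmetry; apply E.
Qed.

Lemma W_conn P X x0 : conn P -> In x0 X -> (forall x, In x X -> P x) ->
  (forall x, In x X -> exists m, rch (fun z => In z X) m x x0) ->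
  forall v, Wp P X v -> exists m, rch (Wp P X) m v x0.
Proof.
  intros Hc Hx0 HXP HX v [Pv Hv].
  assert (XW : forall z, In z X -> Wp P X z).
  { intros z Hz. split; auto. intros [[_ H] _]; auto. }
  destruct (classic (In v X)) as [Hin|Hnin].
  - destruct (HX v Hin) as [m Hm]. exists m. eapply rch_mono; [|exact Hm]. auto.
  - destruct (Hc v x0 Pv (HXP _ Hx0)) as [m Hm].
    destruct (rch_cut _ (fun w => In w X) _ _ _ Hm Hx0 Hnin) as [k [y [y' [_ [Hr [Ha [Hy' _]]]]]]].
    destruct (HX y' Hy') as [m' Hm'].
    exists (S k + m')%nat. eapply rch_app; [|eapply rch_mono; [|exact Hm']; auto].
    eapply rch_snoc; [|exact Ha|auto].
    eapply rch_sub; [exact Hr|]. intros z Hz. split.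
    destruct Hz as [j Hj]. apply rch_end in Hj. tauto.
    intros [_ Hi]. revert Hi. eapply comp_fin_trans; [exact Hz|].
    intros Hi. apply Hv. split; [split; auto|auto].
Qed.

Lemma Inf_adj P X x0 : conn P -> In x0 X -> P x0 -> forall a, Inf P X a ->
  exists z y', Inf P X z /\ In y' X /\ adj y' z /\ comp (PX P X) a z.
Proof.
  intros Hc Hx0 Px0 a Ha. destruct Ha as [[Pa Xa] Ia].
  destruct (Hc a x0 Pa Px0) as [m Hm].
  destruct (rch_cut _ (fun w => In w X) _ _ _ Hm Hx0 Xa) as [k [y [y' [_ [Hr [Hay [Hy' _]]]]]]].
  exists y, y'. split; [|split; [|split]]; auto.
  - split. apply rch_end in Hr; auto. eapply comp_inf_trans; [|exact Ia]. exists k; exact Hr.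
  - exists k; exact Hr.
Qed.

Definition Inv (R : V -> Prop) (x : V) := conn R /\ infinite_set R /\ OE R /\ ~ R x /\ exists a, R a /\ adj x a.
Definition Route (R : V -> Prop) x t n := exists y, R y /\ adj x y /\ rch R n y t.

Lemma step_ex R x t : Inv R x -> R t -> exists R' x', Inv R' x' /\ (forall v, R' v -> R v) /\
  adj x x' /\ R x' /\ ~ R' x' /\ fin (fun v => R v /\ ~ R' v) /\
  (forall v, R v /\ ~ R' v -> exists m, rch (fun w => R w /\ ~ R' w) m v x') /\
  (forall n, Route R x t n -> R' t -> exists k, (k < n)%nat /\ Route R' x' t k).
Proof.
  intros [Hc [Hi [Hoe [Hx [a [Ra Ha]]]]]] Rt.
  destruct (exists_min (Route R x t)) as [n0 [[y [Ry [Hxy Hyt]]] Hmin]].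
  { destruct (Hc a t Ra Rt) as [m Hm]. exists m, a. auto. }
  assert (Hcy : forall v, R v -> exists x0 m, In x0 [y] /\ rch R m v x0).
  { intros v Rv. destruct (Hc v y Rv Ry) as [m Hm]. exists y, m. simpl; auto. }
  assert (Hf := W_fin R [y] Hcy).
  exists (Inf R [y]), y.
  assert (Ny : ~ Inf R [y] y). { intros [[_ H] _]. apply H; simpl; auto. }
  split; [|split; [|split; [|split; [|split; [|split; [|split]]]]]].
  - split; [apply Inf_conn; auto|]. split; [apply Inf_infinite; auto|].
    split; [apply OE_Inf; auto|]. split; auto.
    destruct (nonempty_inf _ (Inf_infinite _ _ Hf Hi)) as [b Hb].
    destruct (Inf_adj R [y] y Hc (or_introl eq_refl) Ry b Hb) as [z [y' [Hz [Hy' [Hyz _]]]]].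
    destruct Hy' as [<-|[]]. eauto.
  - intros v [[H _] _]; auto.
  - auto.
  - auto.
  - auto.
  - exact Hf.
  - intros v Hv. apply (W_conn R [y] y Hc (or_introl eq_refl)).
    intros x0 [<-|[]]; auto.
    intros x0 [<-|[]]. exists 0%nat; constructor; simpl; auto. exact Hv.
  - intros n Hn Rt'. assert (Hle : (n0 <= n)%nat).
    { destruct (Nat.le_gt_cases n0 n); auto. exfalso; eapply Hmin; eauto. }
    assert (Hty : ~ In t [y]). { intros [<-|[]]. apply Ny; auto. }
    destruct (rch_cut _ (fun w => In w [y]) _ _ _ (rch_rev _ _ _ _ Hyt) (or_introl eq_refl) Hty)
      as [k [z [y' [Hk [Hr [Hzy [Hy' _]]]]]]].
    destruct Hy' as [<-|[]].
    exists k. split; [lia|]. exists z. split; [|split].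
    + split. apply rch_end in Hr; auto. eapply comp_inf_trans; [|exact (proj2 Rt')]. exists k; exact Hr.
    + apply Hsym; auto.
    + apply rch_rev. apply Inf_sub; auto.
Qed.

Record St := mkSt { sR : V -> Prop; sx : V; sk : nat }.

Definition StepRel (e : nat -> V) (s s' : St) : Prop :=
  Inv (sR s') (sx s') /\ (forall v, sR s' v -> sR s v) /\ adj (sx s) (sx s') /\ sR s (sx s') /\
  ~ sR s' (sx s') /\ fin (fun v => sR s v /\ ~ sR s' v) /\
  (forall v, sR s v /\ ~ sR s' v -> exists m, rch (fun w => sR s w /\ ~ sR s' w) m v (sx s')) /\
  (forall n, Route (sR s) (sx s) (e (sk s)) n -> sR s' (e (sk s)) ->
     exists k, (k < n)%nat /\ Route (sR s') (sx s') (e (sk s)) k) /\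
  sk s' = (if dec (sR s' (e (sk s))) then sk s else S (sk s)).

Lemma StepRel_ex e s : Inv (sR s) (sx s) -> exists s', StepRel e s s'.
Proof.
  intros HI. destruct s as [R x k]. simpl in *.
  assert (Ht : exists t, R t /\ (R (e k) -> t = e k)).
  { destruct (classic (R (e k))) as [H|H]. exists (e k); auto.
    destruct HI as [_ [Hi _]]. destruct (nonempty_inf _ Hi) as [a Ha]. exists a; split; auto; tauto. }
  destruct Ht as [t [Rt Ht]].
  destruct (step_ex R x t HI Rt) as [R' [x' [H1 [H2 [H3 [H4 [H5 [H6 [H7 H8]]]]]]]]].
  exists (mkSt R' x' (if dec (R' (e k)) then k else S k)). unfold StepRel; simpl.
  repeat (split; auto).
  intros n Hn Hk. assert (Rk : R (e k)) by (destruct Hn as [y [_ [_ Hy]]]; eapply rch_end; eauto).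
  rewrite <- (Ht Rk) in *. auto.
Qed.

Section Process.
Variable e : nat -> V.
Hypothesis He : forall v, exists k, e k = v.
Variable s0 : St.
Hypothesis Hs0 : Inv (sR s0) (sx s0).
Hypothesis Hk0 : sk s0 = 0%nat.

Definition Fs (s : St) : St :=
  match excluded_middle_informative (exists s', StepRel e s s') with
  | left H => proj1_sig (constructive_indefinite_description _ H)
  | right _ => s
  end.

Fixpoint sq (j : nat) : St := match j with O => s0 | S j => Fs (sq j) end.

Lemma sq_step j : Inv (sR (sq j)) (sx (sq j)) /\ StepRel e (sq j) (sq (S j)).
Proof.
  induction j as [|j IH].
  - split; auto. simpl. unfold Fs. destruct (excluded_middle_informative _) as [H|H].
    destruct (constructive_indefinite_description _ H); simpl; auto.
    exfalso. apply H. apply StepRel_ex; auto.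
  - destruct IH as [_ IH]. assert (I1 : Inv (sR (sq (S j))) (sx (sq (S j)))) by (destruct IH; auto).
    split; auto. change (sq (S (S j))) with (Fs (sq (S j))). unfold Fs.
    destruct (excluded_middle_informative _) as [H|H].
    destruct (constructive_indefinite_description _ H); simpl; auto.
    exfalso. apply H. apply StepRel_ex; auto.
Qed.

Lemma sq_mono j j' v : (j <= j')%nat -> sR (sq j') v -> sR (sq j) v.
Proof.
  induction 1; auto. intros Hq. apply IHle. destruct (sq_step m) as [_ [_ [Hs _]]]. auto.
Qed.

Lemma sk_mono j : (sk (sq j) <= sk (sq (S j)))%nat.
Proof.
  destruct (sq_step j) as [_ Hs]. unfold StepRel in Hs. destruct Hs as [_ [_ [_ [_ [_ [_ [_ [_ E]]]]]]]].
  rewrite E. destruct (dec _); lia.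
Qed.

Lemma sk_gone j k : (k < sk (sq j))%nat -> ~ sR (sq j) (e k).
Proof.
  induction j as [|j IH]; intros Hk.
  - simpl in Hk. rewrite Hk0 in Hk. lia.
  - destruct (sq_step j) as [_ Hs]. unfold StepRel in Hs.
    destruct Hs as [_ [Hsub [_ [_ [_ [_ [_ [_ E]]]]]]]].
    rewrite E in Hk. destruct (dec (sR (sq (S j)) (e (sk (sq j))))) eqn:D.
    + intros H. apply (IH Hk). auto.
    + apply decF in D. destruct (Nat.eq_dec k (sk (sq j))) as [->|Hne]; auto.
      intros H. apply (IH ltac:(lia)). auto.
Qed.

Lemma sk_progress j : exists j', (sk (sq j) < sk (sq j'))%nat.
Proof.
  destruct (classic (sR (sq j) (e (sk (sq j))))) as [Hr|Hr].
  2:{ exists (S j). destruct (sq_step j) as [_ Hs]. unfold StepRel in Hs.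
      destruct Hs as [_ [Hsub [_ [_ [_ [_ [_ [_ E]]]]]]]]. rewrite E.
      destruct (classic (sR (sq (S j)) (e (sk (sq j))))) as [D|D]. exfalso; apply Hr, Hsub; exact D.
      rewrite (proj2 (decF _) D). lia. }
  destruct (sq_step j) as [[Hc [_ [_ [_ [a [Ra Ha]]]]]] _].
  destruct (Hc a (e (sk (sq j))) Ra Hr) as [n Hn].
  assert (H : Route (sR (sq j)) (sx (sq j)) (e (sk (sq j))) n) by (exists a; repeat split; auto).
  clear Hn Ra Ha Hc Hr. revert j H.
  induction n as [n IH] using (well_founded_induction lt_wf).
  intros j H.
  destruct (sq_step j) as [_ Hs]. unfold StepRel in Hs.
  destruct Hs as [_ [_ [_ [_ [_ [_ [_ [Hp E]]]]]]]].
  destruct (classic (sR (sq (S j)) (e (sk (sq j))))) as [Hr|Hr].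
  - destruct (Hp n H Hr) as [m [Hm Hm']].
    assert (Ek : sk (sq (S j)) = sk (sq j)).
    { rewrite E. rewrite (proj2 (decP _) Hr). auto. }
    rewrite <- Ek in Hm'. destruct (IH m Hm (S j) Hm') as [j' Hj']. exists j'. lia.
  - exists (S j). rewrite E. rewrite (proj2 (decF _) Hr). lia.
Qed.

Lemma sk_unbounded K : exists j, (K <= sk (sq j))%nat.
Proof.
  induction K as [|K [j Hj]]. exists 0%nat; lia.
  destruct (sk_progress j) as [j' Hj']. exists j'. lia.
Qed.

Lemma sq_drop v : sR s0 v -> exists j, sR (sq j) v /\ ~ sR (sq (S j)) v.
Proof.
  intros H0. destruct (He v) as [k <-]. destruct (sk_unbounded (S k)) as [j Hj].
  assert (G : ~ sR (sq j) (e k)) by (apply sk_gone; lia).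
  clear Hj. induction j as [|j IH]. contradiction.
  destruct (classic (sR (sq j) (e k))) as [H|H]. eauto. auto.
Qed.

Definition Wn (j : nat) : list V := ex (fun v => sR (sq j) v /\ ~ sR (sq (S j)) v).
Definition xn (j : nat) : V := sx (sq (S j)).

Lemma Wn_spec j : NoDup (Wn j) /\ forall v, In v (Wn j) <-> sR (sq j) v /\ ~ sR (sq (S j)) v.
Proof. apply ex_spec. destruct (sq_step j) as [_ [_ [_ [_ [_ [_ [H _]]]]]]]; auto. Qed.

Lemma region_out :
  (forall j, NoDup (Wn j)) /\ (forall j, In (xn j) (Wn j)) /\
  (forall j v, In v (Wn j) -> exists m, rch (fun z => In z (Wn j)) m v (xn j)) /\
  (forall j j' v, In v (Wn j) -> In v (Wn j') -> j = j') /\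
  (forall v, sR s0 v <-> exists j, In v (Wn j)) /\
  adj (sx s0) (xn 0) /\ (forall j, adj (xn j) (xn (S j))).
Proof.
  split; [intros j; apply Wn_spec|]. split.
  { intros j. apply Wn_spec. destruct (sq_step j) as [_ [_ [_ [_ [H1 [H2 _]]]]]]. auto. }
  split.
  { intros j v Hv. apply Wn_spec in Hv. destruct (sq_step j) as [_ [_ [_ [_ [_ [_ [_ [H _]]]]]]]].
    destruct (H v Hv) as [m Hm]. exists m. eapply rch_iff; [|exact Hm]. intros z.
    symmetry; apply Wn_spec. }
  split.
  { intros j j' v H1 H2. apply Wn_spec in H1. apply Wn_spec in H2.
    destruct (Nat.lt_total j j') as [Hl|[Hl|Hl]]; auto; exfalso.
    - apply (proj2 H1). apply (sq_mono (S j) j'); [lia|tauto].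
    - apply (proj2 H2). apply (sq_mono (S j') j); [lia|tauto]. }
  split.
  { intros v. split.
    - intros H. destruct (sq_drop v H) as [j Hj]. exists j. apply Wn_spec; auto.
    - intros [j Hj]. apply Wn_spec in Hj. apply (sq_mono 0 j); [lia|tauto]. }
  split.
  { destruct (sq_step 0) as [_ [_ [_ [H _]]]]. exact H. }
  intros j. destruct (sq_step (S j)) as [_ [_ [_ [H _]]]]. exact H.
Qed.
End Process.

Lemma region_lemma (e : nat -> V) (He : forall v, exists k, e k = v) R s : Inv R s ->
  exists (W : nat -> list V) (x : nat -> V),
  (forall j, NoDup (W j)) /\ (forall j, In (x j) (W j)) /\
  (forall j v, In v (W j) -> exists m, rch (fun z => In z (W j)) m v (x j)) /\
  (forall j j' v, In v (W j) -> In v (W j') -> j = j') /\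
  (forall v, R v <-> exists j, In v (W j)) /\
  adj s (x 0%nat) /\ (forall j, adj (x j) (x (S j))).
Proof.
  intros HI. exists (Wn e (mkSt R s 0%nat)), (xn e (mkSt R s 0%nat)).
  apply (region_out e He (mkSt R s 0%nat) HI eq_refl).
Qed.

Lemma chain_nth k l : forall p a b, chain k l -> nth_error l p = Some a -> nth_error l (S p) = Some b -> gd a b k.
Proof.
  induction l as [|x l IH]; intros p a b Hc H1 H2. destruct p; discriminate.
  destruct p as [|p].
  - simpl in H1, H2. inversion H1; subst. destruct l as [|y l]; [discriminate|].
    simpl in H2. inversion H2; subst. destruct Hc; auto.
  - apply (IH p); auto. eapply chain_tail; eauto.
Qed.

Lemma nth_error_last (l : list V) a d : nth_error l (length l - 1) = Some a -> last l d = a.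
Proof.
  induction l as [|x l IH]. simpl; discriminate.
  destruct l as [|y r].
  - simpl. intros H; inversion H; auto.
  - intros H. change (last (x :: y :: r) d) with (last (y :: r) d). apply IH.
    simpl in H |- *. replace (length r - 0)%nat with (length r) by lia. exact H.
Qed.

Section Assembly.
Variable Wz : Z -> list V.
Variable xz : Z -> V.
Variable K : nat.
Hypothesis H1 : forall i, NoDup (Wz i).
Hypothesis H2 : forall i, In (xz i) (Wz i).
Hypothesis H3 : forall i v, In v (Wz i) -> exists m, rch (fun z => In z (Wz i)) m v (xz i).
Hypothesis H4 : forall i j v, In v (Wz i) -> In v (Wz j) -> i = j.
Hypothesis H5 : forall v, exists i, In v (Wz i).
Hypothesis H6 : forall i, gd (xz i) (xz (i + 1)) K.

Lemma Lz_ex i : exists L, NoDup L /\ (forall z, In z L <-> In z (Wz i)) /\ (exists t, L = xz i :: t) /\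
  gd (last L (xz i)) (xz i) 1 /\ chain 3 L.
Proof. apply (cube (length (Wz i))); auto. Qed.

Definition Lz i := proj1_sig (constructive_indefinite_description _ (Lz_ex i)).
Lemma LzP i : NoDup (Lz i) /\ (forall z, In z (Lz i) <-> In z (Wz i)) /\ (exists t, Lz i = xz i :: t) /\
  gd (last (Lz i) (xz i)) (xz i) 1 /\ chain 3 (Lz i).
Proof. unfold Lz. destruct (constructive_indefinite_description _ _); simpl; auto. Qed.

Definition ell i : Z := Z.of_nat (length (Lz i)).
Lemma ell_pos i : (1 <= ell i)%Z.
Proof. unfold ell. destruct (LzP i) as [_ [_ [[t ->] _]]]. simpl. lia. Qed.

Fixpoint cp (n : nat) : Z := match n with O => 0%Z | S n => (cp n + ell (Z.of_nat n))%Z end.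
Fixpoint cn (n : nat) : Z := match n with O => 0%Z | S n => (cn n - ell (- Z.of_nat n - 1))%Z end.
Definition c (i : Z) : Z := if Z.leb 0 i then cp (Z.to_nat i) else cn (Z.to_nat (- i)).

Lemma c0 : c 0 = 0%Z.
Proof. reflexivity. Qed.

Lemma c_succ i : c (i + 1) = (c i + ell i)%Z.
Proof.
  unfold c. destruct (Z.leb_spec 0 i) as [Hi|Hi].
  - rewrite (proj2 (Z.leb_le 0 (i + 1))) by lia.
    replace (Z.to_nat (i + 1)) with (S (Z.to_nat i)) by lia. simpl. rewrite Z2Nat.id by lia. auto.
  - replace (Z.to_nat (- i)) with (S (Z.to_nat (- i - 1))) by lia. simpl.
    replace (- Z.of_nat (Z.to_nat (- i - 1)) - 1)%Z with i by lia.
    destruct (Z.leb_spec 0 (i + 1)) as [Hi'|Hi'].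
    + assert (i = -1)%Z by lia. subst. simpl. lia.
    + replace (Z.to_nat (- (i + 1))) with (Z.to_nat (- i - 1)) by lia. lia.
Qed.

Lemma c_incr i : (c i + 1 <= c (i + 1))%Z.
Proof. rewrite c_succ. pose proof (ell_pos i). lia. Qed.

Lemma c_mono_nat i (k : nat) : (c i + Z.of_nat k <= c (i + Z.of_nat k))%Z.
Proof.
  induction k as [|k IH]. change (Z.of_nat 0) with 0%Z. rewrite !Z.add_0_r. lia.
  rewrite Nat2Z.inj_succ. pose proof (c_incr (i + Z.of_nat k)).
  replace (i + Z.succ (Z.of_nat k))%Z with (i + Z.of_nat k + 1)%Z by lia. lia.
Qed.

Lemma c_le i j : (i <= j)%Z -> (c i <= c j)%Z.
Proof.
  intros H. pose proof (c_mono_nat i (Z.to_nat (j - i))).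
  replace (i + Z.of_nat (Z.to_nat (j - i)))%Z with j in H0 by lia. lia.
Qed.

Lemma c_surj m : exists i, (c i <= m < c (i + 1))%Z.
Proof.
  destruct (Z.le_gt_cases 0 m) as [Hm|Hm].
  - replace m with (Z.of_nat (Z.to_nat m)) by lia. generalize (Z.to_nat m). intros n.
    induction n as [|n [i Hi]].
    + exists 0%Z. pose proof (c_incr 0) as H. rewrite c0 in *. simpl in *. lia.
    + destruct (Z.lt_ge_cases (Z.of_nat (S n)) (c (i + 1))) as [H|H].
      * exists i. lia.
      * exists (i + 1)%Z. pose proof (c_incr (i + 1)). lia.
  - replace m with (- Z.of_nat (Z.to_nat (- m)))%Z by lia. generalize (Z.to_nat (- m)). intros n.
    induction n as [|n [i Hi]].
    + exists 0%Z. pose proof (c_incr 0) as H. rewrite c0 in *. simpl in *. lia.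
    + destruct (Z.le_gt_cases (c i) (- Z.of_nat (S n))) as [H|H].
      * exists i. lia.
      * exists (i - 1)%Z. pose proof (c_incr (i - 1)). replace (i - 1 + 1)%Z with i in * by lia. lia.
Qed.

Definition iota (v : V) : Z := proj1_sig (constructive_indefinite_description _ (H5 v)).
Lemma iota_spec v : In v (Lz (iota v)).
Proof. unfold iota. destruct (constructive_indefinite_description _ _); simpl. apply LzP; auto. Qed.
Definition pos (v : V) : nat := proj1_sig (constructive_indefinite_description _ (In_nth_error _ _ (iota_spec v))).
Lemma pos_spec v : nth_error (Lz (iota v)) (pos v) = Some v.
Proof. unfold pos. destruct (constructive_indefinite_description _ _); simpl; auto. Qed.

Definition Phi (v : V) : Z := (c (iota v) + Z.of_nat (pos v))%Z.

Lemma iota_eq i k v : nth_error (Lz i) k = Some v -> iota v = i.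
Proof.
  intros H. apply nth_error_In in H. apply (H4 (iota v) i v).
  apply LzP, iota_spec. apply LzP; auto.
Qed.

Lemma Phi_eq i k v : nth_error (Lz i) k = Some v -> Phi v = (c i + Z.of_nat k)%Z.
Proof.
  intros H. unfold Phi. pose proof (iota_eq _ _ _ H) as E. rewrite E.
  pose proof (pos_spec v) as Hp. rewrite E in Hp.
  destruct (LzP i) as [Nd _]. rewrite NoDup_nth_error in Nd.
  rewrite (Nd (pos v) k); auto. apply nth_error_Some. congruence. congruence.
Qed.

Lemma Phi_bounds v : (c (iota v) <= Phi v < c (iota v + 1))%Z.
Proof.
  unfold Phi. rewrite c_succ. pose proof (pos_spec v) as Hp.
  assert (pos v < length (Lz (iota v)))%nat by (apply nth_error_Some; congruence).
  unfold ell. lia.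
Qed.

Lemma Phi_inj u w : Phi u = Phi w -> u = w.
Proof.
  intros E. pose proof (Phi_bounds u). pose proof (Phi_bounds w).
  assert (Ei : iota u = iota w).
  { destruct (Z.lt_total (iota u) (iota w)) as [Hl|[Hl|Hl]]; auto.
    - pose proof (c_le (iota u + 1) (iota w) ltac:(lia)). lia.
    - pose proof (c_le (iota w + 1) (iota u) ltac:(lia)). lia. }
  unfold Phi in E. rewrite Ei in E. assert (Ep : pos u = pos w) by lia.
  pose proof (pos_spec u) as Pu. pose proof (pos_spec w) as Pw. rewrite Ei, Ep in Pu. congruence.
Qed.

Lemma Phi_surj m : exists v, Phi v = m.
Proof.
  destruct (c_surj m) as [i Hi]. rewrite c_succ in Hi.
  set (k := Z.to_nat (m - c i)).
  assert (Hk : (k < length (Lz i))%nat) by (unfold ell in Hi; unfold k; lia).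
  apply nth_error_Some in Hk. destruct (nth_error (Lz i) k) as [v|] eqn:Hv; [|congruence].
  exists v. rewrite (Phi_eq _ _ _ Hv). unfold k. lia.
Qed.

Definition gz (m : Z) : V := proj1_sig (constructive_indefinite_description _ (Phi_surj m)).
Lemma Phi_gz m : Phi (gz m) = m.
Proof. unfold gz. destruct (constructive_indefinite_description _ _); simpl; auto. Qed.
Lemma gz_Phi v : gz (Phi v) = v.
Proof. apply Phi_inj. apply Phi_gz. Qed.

Lemma gz_step m : gd (gz m) (gz (m + 1)) (K + 4).
Proof.
  set (u := gz m). set (i := iota u). pose proof (pos_spec u) as Hp. fold i in Hp.
  assert (Hm : Phi u = m) by apply Phi_gz.
  destruct (nth_error (Lz i) (S (pos u))) as [w|] eqn:Hw.
  - assert (Phi w = m + 1)%Z by (rewrite (Phi_eq _ _ _ Hw); unfold Phi in Hm; fold i in Hm; lia).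
    rewrite <- H, gz_Phi. eapply gd_mono; [|eapply chain_nth; [apply LzP|exact Hp|exact Hw]]. lia.
  - apply nth_error_None in Hw.
    assert (Hl : (pos u < length (Lz i))%nat) by (apply nth_error_Some; congruence).
    assert (Hu : last (Lz i) (xz i) = u).
    { apply nth_error_last. replace (length (Lz i) - 1)%nat with (pos u) by lia. auto. }
    destruct (LzP (i + 1)) as [_ [_ [[t Ht] _]]].
    assert (H0 : nth_error (Lz (i + 1)) 0 = Some (xz (i + 1))) by (rewrite Ht; auto).
    assert (Phi (xz (i + 1)) = m + 1)%Z.
    { rewrite (Phi_eq _ _ _ H0). rewrite c_succ. unfold Phi in Hm. fold i in Hm. unfold ell. lia. }
    rewrite <- H, gz_Phi. apply (gd_mono _ _ (1 + K)); [lia|]. apply (gd_trans _ (xz i)); [|apply H6].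
    destruct (LzP i) as [_ [_ [_ [Hla _]]]]. rewrite Hu in Hla. exact Hla.
Qed.

Lemma gz_far m (n : nat) : gd (gz m) (gz (m + Z.of_nat n)) ((K + 4) * n).
Proof.
  induction n as [|n IH]. change (Z.of_nat 0) with 0%Z. rewrite Z.add_0_r. apply gd_refl.
  replace ((K + 4) * S n)%nat with ((K + 4) * n + (K + 4))%nat by lia.
  eapply gd_trans. exact IH. rewrite Nat2Z.inj_succ.
  replace (m + Z.succ (Z.of_nat n))%Z with (m + Z.of_nat n + 1)%Z by lia. apply gz_step.
Qed.

Lemma assembly : exists act : V -> Z -> V, translation_like_Z adj act /\ transitive_action_Z act.
Proof.
  exists (fun v h => gz (Phi v + h)). split; [split; [|split]|].
  - split.
    + intros x. rewrite Z.add_0_r. apply gz_Phi.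
    + intros x g h. rewrite Phi_gz. f_equal. lia.
  - intros x h E. apply (f_equal Phi) in E. rewrite Phi_gz in E. lia.
  - intros h. exists ((K + 4) * Z.to_nat (Z.abs h))%nat. intros x.
    destruct (Z.le_gt_cases 0 h) as [Hh|Hh].
    + pose proof (gz_far (Phi x) (Z.to_nat h)) as G. rewrite gz_Phi, Z2Nat.id in G by lia.
      replace (Z.abs h) with h by lia. exact G.
    + pose proof (gz_far (Phi x + h) (Z.to_nat (- h))) as G. rewrite Z2Nat.id in G by lia.
      replace (Phi x + h + - h)%Z with (Phi x) in G by lia. rewrite gz_Phi in G.
      replace (Z.abs h) with (- h)%Z by lia. apply gd_sym. exact G.
  - intros x y. exists (Phi y - Phi x)%Z. replace (Phi x + (Phi y - Phi x))%Z with (Phi y) by lia.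
    apply gz_Phi.
Qed.
End Assembly.

Lemma reindex (I : Type) (C : I -> list V) (rp : I -> V) (f : Z -> I) (K : nat)
  (finj : forall i j, f i = f j -> i = j) (fsurj : forall a, exists i, f i = a)
  (C1 : forall a, NoDup (C a)) (C2 : forall a, In (rp a) (C a))
  (C3 : forall a v, In v (C a) -> exists m, rch (fun z => In z (C a)) m v (rp a))
  (C4 : forall a b v, In v (C a) -> In v (C b) -> a = b)
  (C5 : forall v, exists a, In v (C a))
  (C6 : forall i, gd (rp (f i)) (rp (f (i + 1))) K) :
  exists act : V -> Z -> V, translation_like_Z adj act /\ transitive_action_Z act.
Proof.
  apply (assembly (fun i => C (f i)) (fun i => rp (f i)) K); auto.
  - intros i j v Hi Hj. apply finj. eapply C4; eauto.
  - intros v. destruct (C5 v) as [a Ha]. destruct (fsurj a) as [i <-]. eauto.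
Qed.

Definition phi (i : Z) : nat := if Z.leb 0 i then (2 * Z.to_nat i)%nat else (2 * Z.to_nat (- i) - 1)%nat.

Lemma phi_inj i j : phi i = phi j -> i = j.
Proof.
  unfold phi. destruct (Z.leb_spec 0 i); destruct (Z.leb_spec 0 j); intros; lia.
Qed.

Lemma phi_surj n : exists i, phi i = n.
Proof.
  destruct (Nat.Even_or_Odd n) as [[k ->]|[k ->]].
  - exists (Z.of_nat k). unfold phi. destruct (Z.leb_spec 0 (Z.of_nat k)); lia.
  - exists (- Z.of_nat (S k))%Z. unfold phi. destruct (Z.leb_spec 0 (- Z.of_nat (S k))); lia.
Qed.

Lemma fromN (C : nat -> list V) (rp : nat -> V) (K : nat)
  (C1 : forall a, NoDup (C a)) (C2 : forall a, In (rp a) (C a))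
  (C3 : forall a v, In v (C a) -> exists m, rch (fun z => In z (C a)) m v (rp a))
  (C4 : forall a b v, In v (C a) -> In v (C b) -> a = b)
  (C5 : forall v, exists a, In v (C a))
  (C6 : forall n, gd (rp n) (rp (S n)) K) :
  exists act : V -> Z -> V, translation_like_Z adj act /\ transitive_action_Z act.
Proof.
  assert (G2 : forall n, gd (rp n) (rp (S (S n))) (K + K)) by (intros; eapply gd_trans; eauto).
  apply (reindex nat C rp phi (K + K) phi_inj phi_surj); auto.
  intros i. unfold phi. destruct (Z.leb_spec 0 i); destruct (Z.leb_spec 0 (i + 1)).
  - replace (2 * Z.to_nat (i + 1))%nat with (S (S (2 * Z.to_nat i))) by lia. apply G2.
  - lia.
  - assert (i = -1)%Z by lia. subst. simpl. apply gd_sym. eapply gd_mono; [|apply C6]. lia.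
  - apply gd_sym. replace (2 * Z.to_nat (- i) - 1)%nat with (S (S (2 * Z.to_nat (- (i + 1)) - 1))) by lia.
    apply G2.
Qed.

Lemma walk_rch_T n u w : walk adj n u w -> rch (fun _ => True) n u w.
Proof. induction 1; econstructor; eauto. Qed.

Lemma conn_T : connected_graph adj -> conn (fun _ => True).
Proof. intros Hc u w _ _. destruct (Hc u w) as [n Hn]. exists n. apply walk_rch_T; auto. Qed.

Lemma caseA (Hconn : connected_graph adj) (Hinf : infinite_type V) (r : V)
  (e : nat -> V) (He : forall v, exists k, e k = v) (HOE : OE (fun _ => True)) :
  exists act : V -> Z -> V, translation_like_Z adj act /\ transitive_action_Z act.
Proof.
  set (P := fun _ : V => True).
  assert (Hc : conn P) by (apply conn_T; auto).
  assert (Hcy : forall v, P v -> exists x m, In x [r] /\ rch P m v x).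
  { intros v _. destruct (Hc v r I I) as [m Hm]. exists r, m. simpl; auto. }
  assert (Hf := W_fin P [r] Hcy).
  assert (HI : Inv (Inf P [r]) r).
  { split; [apply Inf_conn; auto|]. split; [apply Inf_infinite; auto|].
    split; [apply OE_Inf; auto|]. split. intros [[_ H] _]; apply H; simpl; auto.
    destruct (nonempty_inf _ (Inf_infinite _ _ Hf Hinf)) as [b Hb].
    destruct (Inf_adj P [r] r Hc (or_introl eq_refl) I b Hb) as [z [y' [Hz [Hy' [Hyz _]]]]].
    destruct Hy' as [<-|[]]. eauto. }
  destruct (region_lemma e He _ _ HI) as [Wn' [xn' [R1 [R2 [R3 [R4 [R5 [R6 R7]]]]]]]].
  destruct (ex_spec _ Hf) as [W0nd W0sp].
  set (C := fun n => match n with O => ex (Wp P [r]) | S j => Wn' j end).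
  set (rp := fun n => match n with O => r | S j => xn' j end).
  apply (fromN C rp 1).
  - intros [|j]; simpl; auto.
  - intros [|j]; simpl; auto. apply W0sp. split. exact I. intros [[_ H] _]; apply H; simpl; auto.
  - intros [|j] v Hv; simpl in *; auto.
    apply W0sp in Hv. destruct (W_conn P [r] r Hc (or_introl eq_refl) (fun _ _ => I)) with (v := v)
      as [m Hm]; auto.
    intros x [<-|[]]. exists 0%nat. constructor. simpl; auto.
    exists m. eapply rch_iff; [|exact Hm]. intros z. symmetry. apply W0sp.
  - intros [|j] [|j'] v Hv Hv'; simpl in *; auto.
    + apply W0sp in Hv. exfalso. apply (proj2 Hv). apply R5. eauto.
    + apply W0sp in Hv'. exfalso. apply (proj2 Hv'). apply R5. eauto.
    + f_equal. eapply R4; eauto.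
  - intros v. destruct (classic (Inf P [r] v)) as [H|H].
    + apply R5 in H. destruct H as [j Hj]. exists (S j). auto.
    + exists 0%nat. simpl. apply W0sp. split; auto. exact I.
  - intros [|j]; simpl; apply gd_adj; auto.
Qed.

Definition Tr : V -> Prop := fun _ => True.

Lemma comp_conn (A : V -> Prop) u : conn (comp A u).
Proof.
  intros a b Ha Hb. assert (Hab : comp A a b) by exact (comp_trans _ _ _ _ (comp_sym _ _ _ Ha) Hb).
  destruct Hab as [n Hn]. exists n. eapply rch_sub; [exact Hn|]. intros z Hz. exact (comp_trans _ _ _ _ Ha Hz).
Qed.

Lemma inf_comp_exists (Q : V -> Prop) (T : list V) : conn Q -> infinite_set Q ->
  exists v, Q v /\ ~ In v T /\ infinite_set (comp (PX Q T) v).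
Proof.
  intros Hc Hi. destruct (classic (exists x, In x T /\ Q x)) as [[x0 [Hx0 Qx0]]|Hno].
  - assert (Hcy : forall v, Q v -> exists x m, In x T /\ rch Q m v x).
    { intros v Qv. destruct (Hc v x0 Qv Qx0) as [m Hm]. eauto. }
    destruct (nonempty_inf _ (Inf_infinite _ _ (W_fin Q T Hcy) Hi)) as [v [[Qv Tv] Iv]]. eauto.
  - destruct (nonempty_inf _ Hi) as [v Qv].
    assert (Tv : ~ In v T) by (intros H; apply Hno; eauto).
    exists v. split; auto. split; auto. eapply inf_sup; [|exact Hi].
    intros w Qw. destruct (Hc v w Qv Qw) as [m Hm]. exists m. eapply rch_mono; [|exact Hm].
    intros z Qz. split; auto. intros H; apply Hno; eauto.
Qed.

Lemma ends3T (Hends : at_most_two_ends adj) (S : list V) a b c :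
  ~ In a S -> ~ In b S -> ~ In c S ->
  infinite_set (comp (PX Tr S) a) -> infinite_set (comp (PX Tr S) b) -> infinite_set (comp (PX Tr S) c) ->
  ~ comp (PX Tr S) a b -> ~ comp (PX Tr S) a c -> ~ comp (PX Tr S) b c -> False.
Proof.
  intros Ha Hb Hc Ia Ib Ic Nab Nac Nbc.
  assert (E : forall v, PX Tr S v <-> ~ In v S) by (intros v; unfold PX, Tr; tauto).
  assert (Nc : forall x y, ~ comp (PX Tr S) x y -> ~ comp (fun v => ~ In v S) x y).
  { intros x y H [n Hn]. apply H. exists n. eapply rch_iff; [|exact Hn]. intros v; symmetry; apply E. }
  apply (ends3 Hends S a b c); auto; eapply inf_comp_iff; eauto.
Qed.

Definition Lp (X : list V) (u : V) : V -> Prop := fun v => Inf Tr X v /\ comp (PX Tr X) u v.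

Lemma Lp_sub X u a n z : Lp X u a -> rch (PX Tr X) n a z -> Lp X u z.
Proof.
  intros [Ia Ca] H. split.
  - split. apply rch_end in H; auto. eapply comp_inf_trans; [|exact (proj2 Ia)]. exists n; auto.
  - eapply comp_trans; eauto. exists n; auto.
Qed.

Lemma Lp_conn X u : conn (Lp X u).
Proof.
  intros a b Ha Hb. assert (Hab : comp (PX Tr X) a b).
  { eapply comp_trans; [apply comp_sym, (proj2 Ha)|apply (proj2 Hb)]. }
  destruct Hab as [n Hn]. exists n. eapply rch_sub; [exact Hn|]. intros z [k Hk]. exact (Lp_sub _ _ _ _ _ Ha Hk).
Qed.

Lemma Lp_inf X u : Inf Tr X u -> infinite_set (Lp X u).
Proof.
  intros Iu. eapply inf_sup; [|exact (proj2 Iu)]. intros v [n Hn]. eapply Lp_sub; [|exact Hn].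
  split; auto. exists 0%nat. constructor. exact (proj1 Iu).
Qed.

Lemma OE_Lp (Hends : at_most_two_ends adj) X u w : Inf Tr X u -> Inf Tr X w ->
  ~ comp (PX Tr X) u w -> OE (Lp X u).
Proof.
  intros Iu Iw Nuw T a b La Ta Lb Tb Ia Ib. apply NNPP; intros Nab.
  destruct (inf_comp_exists (Lp X w) T (Lp_conn X w) (Lp_inf X w Iw)) as [c [Mc [Tc Ic]]].
  assert (XT : forall v x, ~ In v (X ++ T) -> (In x X -> ~ In v X) /\ ~ In v T).
  { intros v x H. split; intros; intro; apply H; apply in_or_app; auto. }
  assert (notin : forall v, Lp X u v \/ Lp X w v -> ~ In v T -> ~ In v (X ++ T)).
  { intros v Hv Tv H. apply in_app_or in H. destruct H as [H|H]; [|contradiction].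
    destruct Hv as [[[[_ Hx] _] _]|[[[_ Hx] _] _]]; contradiction. }
  assert (toX : forall x y, comp (PX Tr (X ++ T)) x y -> comp (PX Tr X) x y).
  { intros x y [n Hn]. exists n. eapply rch_mono; [|exact Hn]. intros v [_ Hv]. split. exact I.
    intros H; apply Hv, in_or_app; auto. }
  apply (ends3T Hends (X ++ T) a b c).
  - apply notin; auto.
  - apply notin; auto.
  - apply notin; auto.
  - eapply inf_sup; [|exact Ia]. intros v [n Hn]. exists n. eapply rch_mono; [|exact Hn].
    intros z [Lz' Tz]. split. exact I. apply notin; auto.
  - eapply inf_sup; [|exact Ib]. intros v [n Hn]. exists n. eapply rch_mono; [|exact Hn].
    intros z [Lz' Tz]. split. exact I. apply notin; auto.
  - eapply inf_sup; [|exact Ic]. intros v [n Hn]. exists n. eapply rch_mono; [|exact Hn].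
    intros z [Lz' Tz]. split. exact I. apply notin; auto.
  - intros [n Hn]. apply Nab. exists n. eapply rch_sub; [exact Hn|]. intros z Hz. split.
    + destruct (toX _ _ Hz) as [k Hk]. exact (Lp_sub _ _ _ _ _ La Hk).
    + destruct Hz as [k Hk]. apply rch_end in Hk. destruct Hk as [_ Hk]. intros H; apply Hk, in_or_app; auto.
  - intros Hac. apply Nuw. apply toX in Hac.
    eapply comp_trans; [eapply comp_trans; [exact (proj2 La)|exact Hac]|]. apply comp_sym, (proj2 Mc).
  - intros Hbc. apply Nuw. apply toX in Hbc.
    eapply comp_trans; [eapply comp_trans; [exact (proj2 Lb)|exact Hbc]|]. apply comp_sym, (proj2 Mc).
Qed.

Lemma caseB (Hends : at_most_two_ends adj) (Hconn : connected_graph adj) (r : V)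
  (e : nat -> V) (He : forall v, exists k, e k = v) (HnOE : ~ OE Tr) :
  exists act : V -> Z -> V, translation_like_Z adj act /\ transitive_action_Z act.
Proof.
  destruct (classic (exists SS u w, ~ In u SS /\ ~ In w SS /\
     infinite_set (comp (fun v => Tr v /\ ~ In v SS) u) /\ infinite_set (comp (fun v => Tr v /\ ~ In v SS) w) /\
     ~ comp (fun v => Tr v /\ ~ In v SS) u w)) as [[SS [u [w [Su [Sw [Iu [Iw Nuw]]]]]]]|Hno].
  2:{ exfalso. apply HnOE. intros SS u w _ Su _ Sw Iu Iw. apply NNPP; intros H. apply Hno.
      exists SS, u, w. repeat split; auto. }
  destruct (ball_cover SS r) as [N HN]. { intros s _. apply Hconn. }
  set (X := ballfrom r N).
  assert (SX : forall v, ~ In v X -> ~ In v SS) by (intros v H H'; apply H, HN; auto).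
  assert (Hc : conn Tr) by (apply conn_T; auto).
  assert (Hr : In r X) by apply ball_center.
  assert (Hcy : forall v, Tr v -> exists x m, In x X /\ rch Tr m v x).
  { intros v _. destruct (Hc v r I I) as [m Hm]. eauto. }
  assert (Hf := W_fin Tr X Hcy).
  set (B := fun v => Tr v /\ ~ In v SS).
  assert (getI : forall u0, ~ In u0 SS -> infinite_set (comp B u0) ->
            exists u', comp B u0 u' /\ Inf Tr X u').
  { intros u0 Su0 Iu0. destruct (inf_comp_exists (comp B u0) X (comp_conn B u0) Iu0) as [u' [Cu' [Xu' Iu']]].
    exists u'. split; auto. split. split; auto. exact I.
    eapply inf_sup; [|exact Iu']. intros v [n Hn]. exists n. eapply rch_mono; [|exact Hn].
    intros z [_ Hz]. split; auto. exact I. }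
  destruct (getI u Su Iu) as [u' [Cu Iu']]. destruct (getI w Sw Iw) as [w' [Cw Iw']].
  assert (Nuw' : ~ comp (PX Tr X) u' w').
  { intros [n Hn]. apply Nuw. eapply comp_trans; [exact Cu|]. eapply comp_trans; [|apply comp_sym; exact Cw].
    exists n. eapply rch_mono; [|exact Hn]. intros v [_ Hv]. split. exact I. auto. }
  assert (Nwu' : ~ comp (PX Tr X) w' u') by (intros H; apply Nuw', comp_sym; auto).
  assert (Split : forall v, Inf Tr X v -> Lp X u' v \/ Lp X w' v).
  { intros v Iv. apply NNPP. intros Hn. apply (ends3T Hends X v u' w').
    - exact (proj2 (proj1 Iv)).
    - exact (proj2 (proj1 Iu')).
    - exact (proj2 (proj1 Iw')).
    - exact (proj2 Iv).
    - exact (proj2 Iu').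
    - exact (proj2 Iw').
    - intros H. apply Hn. left. split; auto. apply comp_sym; auto.
    - intros H. apply Hn. right. split; auto. apply comp_sym; auto.
    - exact Nuw'. }
  assert (getInv : forall a b, Inf Tr X a -> Inf Tr X b -> ~ comp (PX Tr X) a b ->
            exists y, In y X /\ Inv (Lp X a) y).
  { intros a b Ia Ib Nab.
    destruct (Inf_adj Tr X r Hc Hr I a Ia) as [z [y' [Iz [Hy' [Hyz Caz]]]]].
    exists y'. split; auto. split; [apply Lp_conn|]. split; [apply Lp_inf; auto|].
    split; [exact (OE_Lp Hends X a b Ia Ib Nab)|]. split.
    - intros [[[_ H] _] _]. contradiction.
    - exists z. split; auto. split; auto. }
  destruct (getInv u' w' Iu' Iw' Nuw') as [yL [XyL IL]].
  destruct (getInv w' u' Iw' Iu' Nwu') as [yM [XyM IM]].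
  destruct (region_lemma e He _ _ IL) as [WL [xL [L1 [L2 [L3 [L4 [L5 [L6 L7]]]]]]]].
  destruct (region_lemma e He _ _ IM) as [WM [xM [M1 [M2 [M3 [M4 [M5 [M6 M7]]]]]]]].
  destruct (ex_spec _ Hf) as [W0nd W0sp].
  set (C := fun a : option (nat + nat) => match a with
            | None => ex (Wp Tr X) | Some (inl j) => WL j | Some (inr j) => WM j end).
  set (rp := fun a : option (nat + nat) => match a with
            | None => r | Some (inl j) => xL j | Some (inr j) => xM j end).
  set (f := fun i : Z => if Z.eqb i 0 then None else if Z.ltb 0 i then Some (inl (Z.to_nat i - 1)%nat)
            else Some (inr (Z.to_nat (- i) - 1)%nat)).
  assert (notW : forall v, Inf Tr X v -> ~ In v (ex (Wp Tr X))).
  { intros v Iv H. apply W0sp in H. apply (proj2 H); auto. }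
  assert (gL : forall j v, In v (WL j) -> Inf Tr X v) by (intros j v H; apply (proj1 (proj2 (L5 v) (ex_intro _ j H)))).
  assert (gM : forall j v, In v (WM j) -> Inf Tr X v) by (intros j v H; apply (proj1 (proj2 (M5 v) (ex_intro _ j H)))).
  assert (LM : forall j j' v, In v (WL j) -> In v (WM j') -> False).
  { intros j j' v H1 H2. pose proof (proj2 (M5 v) (ex_intro _ j' H2)) as K2.
    pose proof (proj2 (L5 v) (ex_intro _ j H1)) as K1. clear H1 H2. rename K1 into H1. rename K2 into H2.
    apply Nuw'. eapply comp_trans; [exact (proj2 H1)|]. apply comp_sym, (proj2 H2). }
  apply (reindex (option (nat + nat)) C rp f (N + 1)).
  - intros i j. unfold f. destruct (Z.eqb_spec i 0); destruct (Z.eqb_spec j 0);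
      destruct (Z.ltb_spec 0 i); destruct (Z.ltb_spec 0 j); intros E; inversion E; lia.
  - intros [[j|j]|].
    + exists (Z.of_nat (S j)). unfold f. destruct (Z.eqb_spec (Z.of_nat (S j)) 0); [exfalso; lia|].
      destruct (Z.ltb_spec 0 (Z.of_nat (S j))); [|exfalso; lia]. f_equal. f_equal. lia.
    + exists (- Z.of_nat (S j))%Z. unfold f. destruct (Z.eqb_spec (- Z.of_nat (S j)) 0); [exfalso; lia|].
      destruct (Z.ltb_spec 0 (- Z.of_nat (S j))); [exfalso; lia|]. f_equal. f_equal. lia.
    + exists 0%Z. reflexivity.
  - intros [[j|j]|]; simpl; auto.
  - intros [[j|j]|]; simpl; auto. apply W0sp. split. exact I. intros [[_ H] _]; auto.
  - intros [[j|j]|] v Hv; simpl in *; auto.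
    apply W0sp in Hv. destruct (W_conn Tr X r Hc Hr (fun _ _ => I)) with (v := v) as [m Hm]; auto.
    intros x Hx. apply ball_rch; auto.
    exists m. eapply rch_iff; [|exact Hm]. intros z. symmetry. apply W0sp.
  - intros [[j|j]|] [[j'|j']|] v Hv Hv'; simpl in *; auto; try (exfalso; eauto; fail).
    all: first [ solve [f_equal; f_equal; eapply L4; eauto] | solve [f_equal; f_equal; eapply M4; eauto]
               | solve [exfalso; eapply notW; [eapply gL|]; eauto]
               | solve [exfalso; eapply notW; [eapply gM|]; eauto] ].
  - intros v. destruct (classic (Inf Tr X v)) as [H|H].
    + destruct (Split v H) as [H'|H'].
      * apply L5 in H'. destruct H' as [j Hj]. exists (Some (inl j)). auto.
      * apply M5 in H'. destruct H' as [j Hj]. exists (Some (inr j)). auto.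
    + exists None. simpl. apply W0sp. split; auto. exact I.
  - assert (G1 : forall y, In y X -> forall z, adj y z -> gd r z (N + 1)).
    { intros y Hy z Hz. eapply gd_trans; [apply ball_gd'; exact Hy|]. apply gd_adj; auto. }
    intros i. unfold f, rp. destruct (Z.eqb_spec i 0) as [->|Hi0].
    + simpl. exact (G1 yL XyL _ L6).
    + destruct (Z.eqb_spec (i + 1) 0) as [Hi1|Hi1].
      * assert (i = -1)%Z by lia. subst. simpl. apply gd_sym. exact (G1 yM XyM _ M6).
      * destruct (Z.ltb_spec 0 i); destruct (Z.ltb_spec 0 (i + 1)); try (exfalso; lia).
        -- simpl. replace (Z.to_nat (i + 1) - 1)%nat with (S (Z.to_nat i - 1)) by lia.
           eapply gd_mono; [|apply gd_adj; apply L7]. lia.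
        -- simpl. replace (Z.to_nat (- i) - 1)%nat with (S (Z.to_nat (- (i + 1)) - 1)) by lia.
           apply gd_sym. eapply gd_mono; [|apply gd_adj; apply M7]. lia.
Qed.

Lemma hard_dir (Hconn : connected_graph adj) (Hinf : infinite_type V) (Hends : at_most_two_ends adj) :
  exists act : V -> Z -> V, translation_like_Z adj act /\ transitive_action_Z act.
Proof.
  destruct (classic (exists v : V, True)) as [[r _]|Hno].
  2:{ exfalso. apply Hinf. exists []. intros x _. apply Hno; eauto. }
  destruct (enum_ex r Hconn) as [e He].
  destruct (classic (OE Tr)) as [H|H].
  - apply (caseA Hconn Hinf r e He H).
  - apply (caseB Hends Hconn r e He H).
Qed.

Section Easy.
Variable A : list (V * V).
Definition cm x y := component (adj_minus adj A) x y.

Lemma am_sym x y : adj_minus adj A x y -> adj_minus adj A y x.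
Proof. intros [H1 [H2 H3]]. split; auto. Qed.
Lemma cm_trans x y z : cm x y -> cm y z -> cm x z.
Proof. intros [n Hn] [m Hm]. exists (n + m)%nat. eapply walk_app; eauto. Qed.
Lemma cm_sym x y : cm x y -> cm y x.
Proof. intros [n Hn]. exists n. apply walk_rev; auto. apply am_sym. Qed.

Definition ends_of : list V := flat_map (fun p => [fst p; snd p]) A.

Lemma walk_avoid m x z : walk adj m x z -> (forall y k, (k <= m)%nat -> walk adj k x y -> ~ In y ends_of) ->
  walk (adj_minus adj A) m x z.
Proof.
  induction 1 as [x|n x y z Ha Hw IH]; intros H. constructor.
  assert (Hx : ~ In x ends_of) by (apply (H x 0%nat); [lia|constructor]).
  assert (Hy : ~ In y ends_of) by (apply (H y 1%nat); [lia|econstructor; eauto; constructor]).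
  apply (walk_cons _ _ n x y z).
  - split; [exact Ha|]. split; intros Hin; [apply Hx|apply Hy]; unfold ends_of; apply in_flat_map;
      eexists; split; eauto; simpl; auto.
  - apply IH. intros y' k Hk Hw'. apply (H y' (S k)); [lia|]. econstructor; eauto.
Qed.
End Easy.

Lemma easy_dir act : translation_like_Z adj act -> transitive_action_Z act -> at_most_two_ends adj.
Proof.
  intros [[Ha0 Hcomp] [Hfree Hbd]] Htr A x1 x2 x3 I1 I2 I3 N12 N13 N23.
  set (f := fun n => act x1 n).
  assert (finj : forall n m, f n = f m -> n = m).
  { intros n m E. unfold f in E. assert (E' : act (act x1 n) (- n) = act (act x1 m) (- n)) by congruence.
    rewrite !Hcomp in E'. replace (n + - n)%Z with 0%Z in E' by lia. rewrite Ha0 in E'.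
    symmetry in E'. apply Hfree in E'. lia. }
  destruct (Hbd 1%Z) as [B1 HB1].
  destruct (fin_near (ends_of A) B1) as [Nl HNl].
  assert (HM : exists M : nat, forall z, In z Nl -> forall n, f n = z -> (Z.abs n <= Z.of_nat M)%Z).
  { clear HNl. induction Nl as [|z l [M HM]].
    - exists 0%nat. intros z [].
    - destruct (Htr x1 z) as [nz Hnz]. exists (Nat.max M (Z.to_nat (Z.abs nz))).
      intros z' [<-|Hz'] n Hn.
      + assert (n = nz) by (apply finj; unfold f in *; congruence). subst. lia.
      + pose proof (HM z' Hz' n Hn). lia. }
  destruct HM as [M HM].
  assert (far : forall n, (Z.of_nat M < Z.abs n)%Z -> cm A (f n) (f (n + 1))).
  { intros n Hn. destruct (HB1 (f n)) as [k [Hk Hw]]. exists k.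
    replace (f (n + 1)) with (act (f n) 1) by (unfold f; rewrite Hcomp; auto).
    apply walk_avoid; auto. intros y k' Hk' Hw' Hy.
    assert (Hz : In (f n) Nl).
    { apply HNl. exists y. split; auto. exists k'; split; auto. lia. }
    pose proof (HM _ Hz n eq_refl). lia. }
  set (pR := f (Z.of_nat M + 1)%Z). set (pL := f (- Z.of_nat M - 1)%Z).
  assert (right : forall k : nat, cm A pR (f (Z.of_nat M + 1 + Z.of_nat k)%Z)).
  { induction k as [|k IH]. exists 0%nat. unfold pR. rewrite Z.add_0_r. constructor.
    eapply cm_trans; [exact IH|]. rewrite Nat2Z.inj_succ.
    replace (Z.of_nat M + 1 + Z.succ (Z.of_nat k))%Z with (Z.of_nat M + 1 + Z.of_nat k + 1)%Z by lia.
    apply far. lia. }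
  assert (left : forall k : nat, cm A pL (f (- Z.of_nat M - 1 - Z.of_nat k)%Z)).
  { induction k as [|k IH]. exists 0%nat. unfold pL. rewrite Z.sub_0_r. constructor.
    eapply cm_trans; [exact IH|]. apply cm_sym. rewrite Nat2Z.inj_succ.
    replace (- Z.of_nat M - 1 - Z.of_nat k)%Z with (- Z.of_nat M - 1 - Z.succ (Z.of_nat k) + 1)%Z by lia.
    apply far. lia. }
  assert (side : forall x, infinite_set (component (adj_minus adj A) x) -> cm A x pR \/ cm A x pL).
  { intros x Ix. apply NNPP; intros Hn. apply Ix.
    exists (map (fun k : nat => f (Z.of_nat k - Z.of_nat M)%Z) (seq 0 (2 * M + 1))).
    intros v Hv. destruct (Htr x1 v) as [n Hn']. fold f in Hn'. subst v.
    destruct (Z.le_gt_cases (Z.abs n) (Z.of_nat M)) as [Hle|Hgt].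
    - apply in_map_iff. exists (Z.to_nat (n + Z.of_nat M)). split.
      + replace (Z.of_nat (Z.to_nat (n + Z.of_nat M)) - Z.of_nat M)%Z with n by lia. reflexivity.
      + apply in_seq. lia.
    - exfalso. apply Hn. destruct (Z.le_gt_cases 0 n).
      + left. eapply cm_trans; [exact Hv|]. apply cm_sym.
        pose proof (right (Z.to_nat (n - Z.of_nat M - 1))) as R.
        replace (Z.of_nat M + 1 + Z.of_nat (Z.to_nat (n - Z.of_nat M - 1)))%Z with n in R by lia. exact R.
      + right. eapply cm_trans; [exact Hv|]. apply cm_sym.
        pose proof (left (Z.to_nat (- n - Z.of_nat M - 1))) as R.
        replace (- Z.of_nat M - 1 - Z.of_nat (Z.to_nat (- n - Z.of_nat M - 1)))%Z with n in R by lia. exact R. }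
  destruct (side x1 I1) as [S1|S1]; destruct (side x2 I2) as [S2|S2]; destruct (side x3 I3) as [S3|S3];
    first [ apply N12; eapply cm_trans; [exact S1|apply cm_sym; exact S2]
          | apply N13; eapply cm_trans; [exact S1|apply cm_sym; exact S3]
          | apply N23; eapply cm_trans; [exact S2|apply cm_sym; exact S3] ].
Qed.
End G.

Theorem corollary3p4 (V : Type) (adj : V -> V -> Prop)
  (Hsym : forall x y, adj x y -> adj y x)
  (Hirr : forall x, ~ adj x x)
  (Hconn : connected_graph adj)
  (Hinf : infinite_type V)
  (Hdeg : bounded_degree adj) :
  (exists act : V -> Z -> V,
      translation_like_Z adj act /\ transitive_action_Z act)
  <-> at_most_two_ends adj.
Proof.
  split.
  - intros [act [H1 H2]]. exact (easy_dir V adj Hsym Hdeg act H1 H2).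
  - intros Hends. exact (hard_dir V adj Hsym Hdeg Hconn Hinf Hends).
Qed.
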